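(* For every $s>0$ there are constants $c,C>0$ such that for every locally constant function $f:\mathbb{Z}_2\to\mathbb{C}$, $$c\,N_s(f)\le \|f\|_{H^s(\mathbb{Z}_2)}\le C\,N_s(f),\qquad N_s(f)=\|f\|_{L^2(\mathbb{Z}_2)}+\left(\int_{\mathbb{Z}_2}\int_{\mathbb{Z}_2}\frac{|f(x)-f(y)|^2}{|x-y|_2^{1+2s}}\,d\mu(x)\,d\mu(y)\right)^{1/2}.$$
   Context: $\mathbb{Z}_2$ is the ring of 2-adic integers with 2-adic absolute value $|\cdot|_2$ and Haar probability measure $\mu$. $\Lambda=\mathbb{Q}_2/\mathbb{Z}_2$; $\mathcal F(f)(\lambda)=\int_{\mathbb{Z}_2}e^{-2i\pi\lambda x}f(x)\,d\mu(x)$; $\|f\|_{H^s(\mathbb{Z}_2)}=\big(\sum_{\lambda\in\Lambda}(1+|\lambda|_2)^{2s}|\mathcal F(f)(\lambda)|^2\big)^{1/2}$. *)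

(* Defs.v *)
From Stdlib Require Import Reals Lra.
From Coquelicot Require Import Coquelicot.
Open Scope R_scope.

(* 2-adic integers, as their sequence of binary digits: x = sum_i x_i 2^i. *)
Definition Z2 := nat -> bool.

Fixpoint trunc (x : Z2) (n : nat) : nat :=
  match n with
  | O => O
  | S m => (trunc x m + (if x m then Nat.pow 2 m else 0))%nat
  end.

Definition of_nat (a : nat) : Z2 := fun i => Nat.testbit a i.

Definition agree (x y : Z2) (n : nat) : Prop := forall i, (i < n)%nat -> x i = y i.

(* n is the 2-adic valuation of x - y: first index where the digits differ *)
Definition first_diff (x y : Z2) (n : nat) : bool :=
  Nat.eqb (trunc x n) (trunc y n) && negb (Bool.eqb (x n) (y n)).

(* |x - y|_2 = 2^(-v_2(x-y)), and 0 if x = y *)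
Definition dist2 (x y : Z2) : R :=
  Series (fun n => if first_diff x y n then (/ 2) ^ n else 0).

Definition locally_constant (f : Z2 -> C) : Prop :=
  forall x, exists n, forall y, agree x y n -> f y = f x.

(* Integral against the Haar probability measure mu of Z2, as the limit of
   the averages over the coset representatives 0, ..., 2^m - 1 of 2^m Z2
   (exact for locally constant / continuous integrands). *)
Definition haar_int (g : Z2 -> R) : R :=
  real (Lim_seq (fun m => (/ 2) ^ m *
        sum_n (fun a => g (of_nat a)) (Nat.pow 2 m - 1)%nat)).

Definition haar_intC (g : Z2 -> C) : C :=
  (haar_int (fun x => Re (g x)), haar_int (fun x => Im (g x))).

Definition L2norm (f : Z2 -> C) : R := sqrt (haar_int (fun x => Cmod (f x) ^ 2)).

(* Lambda = Q_2/Z_2 is enumerated bijectively by pairs (j, k) with k < 2^j and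
   (j = 0 or k odd): the pair stands for lambda = k / 2^j (reduced), so
   |lambda|_2 = 2^j for j >= 1 and |0|_2 = 0. *)
Definition lam_valid (j k : nat) : bool := Nat.eqb j 0 || Nat.odd k.
Definition lam_abs (j : nat) : R := if Nat.eqb j 0 then 0 else 2 ^ j.

(* e^{-2 i pi lambda x} with lambda = k/2^j: lambda x = k (x mod 2^j) / 2^j mod 1 *)
Definition chi (j k : nat) (x : Z2) : C :=
  let t := INR (k * trunc x j) / 2 ^ j in (cos (2 * PI * t), - sin (2 * PI * t)).

Definition fourier (f : Z2 -> C) (j k : nat) : C :=
  haar_intC (fun x => Cmult (chi j k x) (f x)).

(* H^s norm: sum over Lambda, grouped by the exponent j *)
Definition Hs_norm (s : R) (f : Z2 -> C) : R :=
  sqrt (Series (fun j =>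
    sum_n (fun k => if lam_valid j k
                    then Rpower (1 + lam_abs j) (2 * s) * Cmod (fourier f j k) ^ 2
                    else 0) (Nat.pow 2 j - 1)%nat)).

Definition Ns (s : R) (f : Z2 -> C) : R :=
  L2norm f +
  sqrt (haar_int (fun x => haar_int (fun y =>
          Cmod (Cminus (f x) (f y)) ^ 2 / Rpower (dist2 x y) (1 + 2 * s)))).

(* Main.v *)
Require Import Defs.
From Stdlib Require Import Reals Lra Lia Classical.
From Coquelicot Require Import Coquelicot.
Open Scope R_scope.

Fixpoint ssum (N : nat) (g : nat -> R) : R :=
  match N with O => 0 | S N' => ssum N' g + g N' end.

Lemma ssum_ext N g h : (forall i, (i < N)%nat -> g i = h i) -> ssum N g = ssum N h.
Proof. induction N; simpl; intros H; [reflexivity|]. rewrite IHN by (intros; apply H; lia). rewrite H by lia. reflexivity. Qed.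

Lemma ssum_plus N g h : ssum N (fun i => g i + h i) = ssum N g + ssum N h.
Proof. induction N; simpl; [lra|]. rewrite IHN; lra. Qed.

Lemma ssum_minus N g h : ssum N (fun i => g i - h i) = ssum N g - ssum N h.
Proof. induction N; simpl; [lra|]. rewrite IHN; lra. Qed.

Lemma ssum_scal N c g : ssum N (fun i => c * g i) = c * ssum N g.
Proof. induction N; simpl; [lra|]. rewrite IHN; lra. Qed.

Lemma ssum_scalr N c g : ssum N (fun i => g i * c) = ssum N g * c.
Proof. induction N; simpl; [lra|]. rewrite IHN; lra. Qed.

Lemma ssum_zero N : ssum N (fun _ => 0) = 0.
Proof. induction N; simpl; [lra|]. rewrite IHN; lra. Qed.

Lemma ssum_const N c : ssum N (fun _ => c) = INR N * c.
Proof. induction N; simpl ssum; [simpl; lra|]. rewrite IHN, S_INR; lra. Qed.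

Lemma ssum_le N g h : (forall i, (i < N)%nat -> g i <= h i) -> ssum N g <= ssum N h.
Proof. induction N; simpl; intros H; [lra|]. assert (g N <= h N) by (apply H; lia).
 assert (ssum N g <= ssum N h) by (apply IHN; intros; apply H; lia). lra. Qed.

Lemma ssum_nonneg N g : (forall i, (i < N)%nat -> 0 <= g i) -> 0 <= ssum N g.
Proof. intros H. rewrite <- (ssum_zero N). apply ssum_le. auto. Qed.

Lemma ssum_swap N M (g : nat -> nat -> R) :
  ssum N (fun i => ssum M (fun j => g i j)) = ssum M (fun j => ssum N (fun i => g i j)).
Proof. induction N; simpl. - rewrite ssum_zero; reflexivity.
 - rewrite IHN, <- ssum_plus. reflexivity. Qed.

Lemma ssum_add N M g : ssum (N + M) g = ssum N g + ssum M (fun i => g (N + i)%nat).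
Proof. induction M; simpl. - rewrite Nat.add_0_r; lra.
 - rewrite Nat.add_succ_r; simpl. rewrite IHM; lra. Qed.

Lemma ssum_mul N M g : ssum (N * M) g = ssum N (fun r => ssum M (fun q => g (r + N * q)%nat)).
Proof. induction M.
 - rewrite Nat.mul_0_r. simpl. rewrite ssum_zero. reflexivity.
 - rewrite Nat.mul_succ_r, ssum_add, IHM. simpl ssum. rewrite ssum_plus. f_equal.
   apply ssum_ext; intros. f_equal. lia. Qed.

Lemma ssum_S N g : ssum (S N) g = ssum N g + g N.
Proof. reflexivity. Qed.

Lemma ssum_evenodd N g : ssum (2 * N) g = ssum N (fun i => g (2 * i)%nat + g (2 * i + 1)%nat).
Proof. induction N. - reflexivity.
 - replace (2 * S N)%nat with (S (S (2 * N))) by lia. rewrite !ssum_S, IHN.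
   replace (S (2 * N)) with (2 * N + 1)%nat by lia. lra. Qed.

Lemma ssum_delta N r X : (r < N)%nat ->
  ssum N (fun r' => if Nat.eqb r r' then X r' else 0) = X r.
Proof. induction N; intros H; [lia|]. simpl.
 destruct (Nat.eqb_spec r N).
 - subst. rewrite (ssum_ext _ _ (fun _ => 0)). rewrite ssum_zero; lra.
   intros i Hi. destruct (Nat.eqb_spec N i); [lia|reflexivity].
 - rewrite IHN by lia. lra. Qed.

Lemma sum_n_ssum g N : sum_n g N = ssum (S N) g.
Proof. induction N. - rewrite sum_O. simpl. lra.
 - rewrite sum_Sn, IHN. reflexivity. Qed.

Lemma pow2_pos n : (0 < 2 ^ n)%nat.
Proof. induction n; simpl; lia. Qed.

Lemma sum_n_pow2 g n : sum_n g (2 ^ n - 1)%nat = ssum (2 ^ n) g.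
Proof. rewrite sum_n_ssum. f_equal. pose proof (pow2_pos n). lia. Qed.

Lemma trunc_lt x n : (trunc x n < 2 ^ n)%nat.
Proof. induction n; simpl; [lia|]. destruct (x n); lia. Qed.

Lemma trunc_agree x y n : trunc x n = trunc y n <-> agree x y n.
Proof. unfold agree. induction n; simpl.
 - split; intros; [lia|reflexivity].
 - pose proof (trunc_lt x n). pose proof (trunc_lt y n).
   remember (2 ^ n)%nat as P. split.
   + intros Hh i Hi.
     assert (trunc x n = trunc y n /\ x n = y n) as [H1 H2].
     { destruct (x n), (y n); split; auto; lia. }
     destruct (Nat.eq_dec i n). subst; auto. apply IHn; auto. lia.
   + intros Hh. rewrite (proj2 IHn) by (intros; apply Hh; lia). rewrite (Hh n) by lia. reflexivity.
Qed.

Lemma trunc_of_nat a n : trunc (of_nat a) n = (a mod 2 ^ n)%nat.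
Proof. induction n; simpl. - reflexivity.
 - rewrite IHn. replace (2 ^ n + (2 ^ n + 0))%nat with (2 ^ n * 2)%nat by lia.
   rewrite (Nat.Div0.mod_mul_r a (2 ^ n) 2).
   pose proof (Nat.testbit_spec' a n). unfold of_nat.
   destruct (Nat.testbit a n); cbn [Nat.b2n] in H; rewrite <- H; lia. Qed.

Lemma agree_le x y n m : (m <= n)%nat -> agree x y n -> agree x y m.
Proof. unfold agree; intros; apply H0; lia. Qed.

Lemma agree_sym x y n : agree x y n -> agree y x n.
Proof. unfold agree; intros H i Hi; symmetry; auto. Qed.

Lemma agree_trans x y z n : agree x y n -> agree y z n -> agree x z n.
Proof. unfold agree; intros H1 H2 i Hi; rewrite H1; auto. Qed.

Lemma agree_of_nat a b n : agree (of_nat a) (of_nat b) n <-> (a mod 2 ^ n = b mod 2 ^ n)%nat.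
Proof. rewrite <- trunc_agree, !trunc_of_nat. tauto. Qed.

Lemma agree_of_nat_mod a n : agree (of_nat (a mod 2 ^ n)) (of_nat a) n.
Proof. apply agree_of_nat. rewrite Nat.Div0.mod_mod. reflexivity. Qed.
Definition unif (g : Z2 -> R) (n : nat) : Prop := forall x y, agree x y n -> g x = g y.
Definition Avg (m : nat) (g : Z2 -> R) : R := (/ 2) ^ m * ssum (2 ^ m) (fun a => g (of_nat a)).

Lemma unif_le g n m : (n <= m)%nat -> unif g n -> unif g m.
Proof. unfold unif; intros. apply H0. eapply agree_le; eauto. Qed.

Lemma Avg_step g n m : unif g n -> (n <= m)%nat -> Avg (S m) g = Avg m g.
Proof. intros Hu Hm. unfold Avg.
 replace (2 ^ S m)%nat with (2 ^ m + 2 ^ m)%nat by (simpl; lia).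
 rewrite ssum_add.
 rewrite (ssum_ext (2 ^ m) (fun i => g (of_nat (2 ^ m + i)%nat)) (fun a => g (of_nat a))).
 - simpl pow. field.
 - intros i _. apply Hu. apply (agree_le _ _ m); auto. apply agree_of_nat.
   replace (2 ^ m + i)%nat with (i + 1 * 2 ^ m)%nat by lia. apply Nat.Div0.mod_add.
Qed.

Lemma Avg_stable g n m : unif g n -> (n <= m)%nat -> Avg m g = Avg n g.
Proof. intros Hu Hm. induction Hm. reflexivity. rewrite (Avg_step g n m); auto. Qed.

Lemma haar_Avg g n : unif g n -> haar_int g = Avg n g.
Proof. intros Hu. unfold haar_int.
 rewrite (Lim_seq_ext_loc _ (fun _ => Avg n g)). rewrite Lim_seq_const. reflexivity.
 exists n. intros m Hm. rewrite sum_n_pow2. fold (Avg m g). apply (Avg_stable g n m); auto.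
Qed.

Lemma ssum_tail N M h : (forall i, (N <= i)%nat -> h i = 0) -> (N <= M)%nat -> ssum M h = ssum N h.
Proof. intros H Hm. induction Hm. reflexivity. rewrite ssum_S, IHHm, H by lia. lra. Qed.

Lemma Series_finite h n : (forall i, (n < i)%nat -> h i = 0) -> Series h = ssum (S n) h.
Proof. intros H. unfold Series.
 rewrite (Lim_seq_ext_loc _ (fun _ => ssum (S n) h)). rewrite Lim_seq_const. reflexivity.
 exists n. intros m Hm. rewrite sum_n_ssum. apply ssum_tail; [intros; apply H; lia | lia].
Qed.
Lemma ssum_telescope N (G : nat -> R) : ssum N (fun k => G (S k) - G k) = G N - G O.
Proof. induction N; simpl; [lra|]. rewrite IHN; lra. Qed.

Lemma orth_pos N m : (0 < m)%nat -> (m < N)%nat ->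
  let x := 2 * PI * INR m / INR N in
  ssum N (fun k => cos (INR k * x)) = 0 /\ ssum N (fun k => sin (INR k * x)) = 0.
Proof. intros Hm HN x.
 assert (HNr : 0 < INR N) by (apply lt_0_INR; lia).
 assert (Hmr : 0 < INR m) by (apply lt_0_INR; lia).
 assert (HmN : INR m < INR N) by (apply lt_INR; lia).
 set (h := x / 2).
 assert (Hs : 0 < sin h).
 { apply sin_gt_0; unfold h, x.
   - apply Rdiv_lt_0_compat; [|lra]. apply Rdiv_lt_0_compat; auto. pose proof PI_RGT_0. nra.
   - pose proof PI_RGT_0. apply (Rmult_lt_reg_r (2 * INR N)); [lra|].
     field_simplify; try lra. nra. }
 assert (HNx : INR N * x = 2 * INR m * PI) by (unfold x; field; lra).
 split.
 - assert (E : ssum N (fun k => sin (INR (S k) * x - h) - sin (INR k * x - h))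
              = 2 * sin h * ssum N (fun k => cos (INR k * x))).
   { rewrite <- ssum_scal. apply ssum_ext; intros k _. rewrite S_INR.
     replace ((INR k + 1) * x - h) with (INR k * x + h) by (unfold h; lra).
     rewrite sin_plus, sin_minus. ring. }
   rewrite (ssum_telescope N (fun k => sin (INR k * x - h))) in E. simpl INR in E.
   replace (INR N * x - h) with (- h + 2 * INR m * PI) in E by lra.
   rewrite sin_period in E.
   replace (0 * x - h) with (- h) in E by lra.
   assert (sin h * ssum N (fun k => cos (INR k * x)) = 0) by lra.
   apply Rmult_integral in H. destruct H; [lra|auto].
 - assert (E : ssum N (fun k => cos (INR (S k) * x - h) - cos (INR k * x - h))
              = - (2 * sin h * ssum N (fun k => sin (INR k * x)))).
   { rewrite <- ssum_scal. replace (- ssum N (fun i => 2 * sin h * sin (INR i * x))) with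
       (-1 * ssum N (fun i => 2 * sin h * sin (INR i * x))) by ring.
     rewrite <- ssum_scal. apply ssum_ext; intros k _. rewrite S_INR.
     replace ((INR k + 1) * x - h) with (INR k * x + h) by (unfold h; lra).
     rewrite cos_plus, cos_minus. ring. }
   rewrite (ssum_telescope N (fun k => cos (INR k * x - h))) in E. simpl INR in E.
   replace (INR N * x - h) with (- h + 2 * INR m * PI) in E by lra.
   rewrite cos_period in E.
   replace (0 * x - h) with (- h) in E by lra.
   assert (sin h * ssum N (fun k => sin (INR k * x)) = 0) by lra.
   apply Rmult_integral in H. destruct H; [lra|auto].
Qed.

Lemma orth N r r' : (r < N)%nat -> (r' < N)%nat ->
  let x := 2 * PI * (INR r' - INR r) / INR N in
  ssum N (fun k => cos (INR k * x)) = (if Nat.eqb r r' then INR N else 0) /\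
  ssum N (fun k => sin (INR k * x)) = 0.
Proof. intros Hr Hr' x.
 assert (HNr : 0 < INR N) by (apply lt_0_INR; lia).
 destruct (Nat.eqb_spec r r').
 - subst. unfold x. replace (INR r' - INR r') with 0 by ring.
   split.
   + rewrite (ssum_ext _ _ (fun _ => 1)). rewrite ssum_const; ring.
     intros. replace (INR i * (2 * PI * 0 / INR N)) with 0 by (field; lra). apply cos_0.
   + rewrite (ssum_ext _ _ (fun _ => 0)). apply ssum_zero.
     intros. replace (INR i * (2 * PI * 0 / INR N)) with 0 by (field; lra). apply sin_0.
 - destruct (Nat.ltb_spec r r') as [Hlt|Hlt].
   + pose proof (orth_pos N (r' - r) ltac:(lia) ltac:(lia)) as [A B].
     rewrite minus_INR in A, B by lia. fold x in A, B. auto.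
   + pose proof (orth_pos N (r - r') ltac:(lia) ltac:(lia)) as [A B].
     rewrite minus_INR in A, B by lia. split.
     * rewrite <- A. apply ssum_ext; intros. unfold x.
       replace (INR i * (2 * PI * (INR r' - INR r) / INR N)) with
         (- (INR i * (2 * PI * (INR r - INR r') / INR N))) by (field; lra).
       apply cos_neg.
     * rewrite (ssum_ext _ _ (fun k => -1 * sin (INR k * (2 * PI * (INR r - INR r') / INR N)))).
       rewrite ssum_scal, B. ring.
       intros. unfold x.
       replace (INR i * (2 * PI * (INR r' - INR r) / INR N)) with
         (- (INR i * (2 * PI * (INR r - INR r') / INR N))) by (field; lra).
       rewrite sin_neg. ring.
Qed.
Lemma ssum_sq N a : (ssum N a) ^ 2 = ssum N (fun r => ssum N (fun r' => a r * a r')).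
Proof. replace ((ssum N a) ^ 2) with (ssum N a * ssum N a) by ring.
 rewrite <- ssum_scalr. apply ssum_ext; intros. rewrite <- ssum_scal. reflexivity. Qed.

Lemma parseval N (U V : nat -> R) : (0 < N)%nat ->
  ssum N (fun k => (ssum N (fun r => cos (2 * PI * (INR (k * r) / INR N)) * U r
                                      + sin (2 * PI * (INR (k * r) / INR N)) * V r)) ^ 2
                 + (ssum N (fun r => cos (2 * PI * (INR (k * r) / INR N)) * V r
                                      - sin (2 * PI * (INR (k * r) / INR N)) * U r)) ^ 2)
  = INR N * ssum N (fun r => U r ^ 2 + V r ^ 2).
Proof. intros HN. assert (HNr : 0 < INR N) by (apply lt_0_INR; lia).
 set (x := fun r r' : nat => 2 * PI * (INR r' - INR r) / INR N).
 transitivity (ssum N (fun k => ssum N (fun r => ssum N (fun r' =>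
    (U r * U r' + V r * V r') * cos (INR k * x r r') + (U r * V r' - V r * U r') * sin (INR k * x r r'))))).
 { apply ssum_ext; intros k _. rewrite !ssum_sq, <- ssum_plus. apply ssum_ext; intros r _.
   rewrite <- ssum_plus. apply ssum_ext; intros r' _.
   set (a := 2 * PI * (INR (k * r) / INR N)). set (b := 2 * PI * (INR (k * r') / INR N)).
   assert (Hx : INR k * x r r' = b - a).
   { unfold x, a, b. rewrite !mult_INR. field. lra. }
   rewrite Hx, cos_minus, sin_minus. ring. }
 rewrite ssum_swap.
 rewrite <- ssum_scal. apply ssum_ext; intros r Hr.
 rewrite ssum_swap.
 transitivity (ssum N (fun r' => if Nat.eqb r r' then (U r * U r' + V r * V r') * INR N else 0)).
 { apply ssum_ext; intros r' Hr'.
   pose proof (orth N r r' Hr Hr') as [A B].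
   rewrite ssum_plus, ssum_scal, ssum_scal. fold (x r r') in A, B. rewrite A, B.
   destruct (Nat.eqb r r'); ring. }
 rewrite ssum_delta by auto. ring.
Qed.
Definition unifC (f : Z2 -> C) (n : nat) : Prop := forall x y, agree x y n -> f x = f y.

Lemma Cmod_sq z : Cmod z ^ 2 = fst z ^ 2 + snd z ^ 2.
Proof. unfold Cmod. apply pow2_sqrt. nra. Qed.

Lemma chi_unif j k x y m : (j <= m)%nat -> agree x y m -> chi j k x = chi j k y.
Proof. intros Hj H. unfold chi. rewrite (proj2 (trunc_agree x y j)). reflexivity.
 eapply agree_le; eauto. Qed.

Lemma chi_of_nat_mod j k r q : (r < 2 ^ j)%nat -> chi j k (of_nat (r + 2 ^ j * q)) = chi j k (of_nat r).
Proof. intros Hr. unfold chi. rewrite !trunc_of_nat.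
 replace (r + 2 ^ j * q)%nat with (r + q * 2 ^ j)%nat by lia. rewrite Nat.Div0.mod_add.
 reflexivity. Qed.

Definition ang (j k r : nat) : R := 2 * PI * (INR (k * r) / 2 ^ j).

Lemma chi_small j k r : (r < 2 ^ j)%nat -> chi j k (of_nat r) = (cos (ang j k r), - sin (ang j k r)).
Proof. intros Hr. unfold chi, ang. rewrite trunc_of_nat, Nat.mod_small by auto. reflexivity. Qed.

Definition Ure (f : Z2 -> C) j m r := ssum (2 ^ (m - j)) (fun q => fst (f (of_nat (r + 2 ^ j * q)))).
Definition Uim (f : Z2 -> C) j m r := ssum (2 ^ (m - j)) (fun q => snd (f (of_nat (r + 2 ^ j * q)))).

Lemma Avg_split m j (g : Z2 -> R) : (j <= m)%nat ->
  Avg m g = (/ 2) ^ m * ssum (2 ^ j) (fun r => ssum (2 ^ (m - j)) (fun q => g (of_nat (r + 2 ^ j * q)))).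
Proof. intros H. unfold Avg. f_equal.
 replace (2 ^ m)%nat with (2 ^ j * 2 ^ (m - j))%nat by (rewrite <- Nat.pow_add_r; f_equal; lia).
 rewrite ssum_mul. reflexivity. Qed.

Lemma fourier_formula f n j k m : unifC f n -> (j <= m)%nat -> (n <= m)%nat ->
  fourier f j k =
  ((/ 2) ^ m * ssum (2 ^ j) (fun r => cos (ang j k r) * Ure f j m r + sin (ang j k r) * Uim f j m r),
   (/ 2) ^ m * ssum (2 ^ j) (fun r => cos (ang j k r) * Uim f j m r - sin (ang j k r) * Ure f j m r)).
Proof. intros Hf Hj Hn. unfold fourier, haar_intC.
 assert (Hu1 : unif (fun x => Re (Cmult (chi j k x) (f x))) m).
 { intros x y H. rewrite (chi_unif j k x y m), (Hf x y); auto. eapply agree_le; eauto. }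
 assert (Hu2 : unif (fun x => Im (Cmult (chi j k x) (f x))) m).
 { intros x y H. rewrite (chi_unif j k x y m), (Hf x y); auto. eapply agree_le; eauto. }
 rewrite (haar_Avg _ _ Hu1), (haar_Avg _ _ Hu2), !(Avg_split m j) by auto.
 f_equal; f_equal; apply ssum_ext; intros r Hr; unfold Ure, Uim;
   rewrite <- !ssum_scal, <- ssum_plus || rewrite <- !ssum_scal, <- ssum_minus;
   apply ssum_ext; intros q _; rewrite chi_of_nat_mod, chi_small by auto;
   unfold Re, Im, Cmult; simpl; ring.
Qed.
Definition P (f : Z2 -> C) (j : nat) : R := ssum (2 ^ j) (fun k => Cmod (fourier f j k) ^ 2).
Definition Lsq (f : Z2 -> C) : R := haar_int (fun x => Cmod (f x) ^ 2).

Lemma INR_pow2 j : INR (2 ^ j) = 2 ^ j.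
Proof. rewrite pow_INR. reflexivity. Qed.

Lemma P_formula f n j m : unifC f n -> (j <= m)%nat -> (n <= m)%nat ->
  P f j = (/ 2) ^ m * (/ 2) ^ m * 2 ^ j * ssum (2 ^ j) (fun r => Ure f j m r ^ 2 + Uim f j m r ^ 2).
Proof. intros Hf Hj Hn. unfold P.
 rewrite (ssum_ext _ _ (fun k => ((/ 2) ^ m * (/ 2) ^ m) *
   ((ssum (2 ^ j) (fun r => cos (2 * PI * (INR (k * r) / INR (2 ^ j))) * Ure f j m r
                    + sin (2 * PI * (INR (k * r) / INR (2 ^ j))) * Uim f j m r)) ^ 2
   + (ssum (2 ^ j) (fun r => cos (2 * PI * (INR (k * r) / INR (2 ^ j))) * Uim f j m r
                    - sin (2 * PI * (INR (k * r) / INR (2 ^ j))) * Ure f j m r)) ^ 2))).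
 - rewrite ssum_scal, parseval by apply pow2_pos. rewrite INR_pow2. ring.
 - intros k _. rewrite Cmod_sq, (fourier_formula f n j k m) by auto. simpl fst; simpl snd.
   unfold ang. rewrite INR_pow2. ring.
Qed.

Lemma Lsq_Avg f n : unifC f n -> Lsq f = Avg n (fun x => Cmod (f x) ^ 2).
Proof. intros Hf. apply haar_Avg. intros x y H. rewrite (Hf x y H). reflexivity. Qed.

Lemma P_top f n j : unifC f n -> (n <= j)%nat -> P f j = Lsq f.
Proof. intros Hf Hj. rewrite (P_formula f n j j) by auto.
 rewrite (Lsq_Avg f n Hf). assert (Hu : unif (fun x => Cmod (f x) ^ 2) n).
 { intros x y H. rewrite (Hf x y H). reflexivity. }
 rewrite <- (Avg_stable _ n j) by auto. unfold Avg.
 replace ((/ 2) ^ j * (/ 2) ^ j * 2 ^ j) with ((/ 2) ^ j).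
 2:{ rewrite <- Rinv_pow by lra. field. apply pow_nonzero; lra. }
 f_equal. apply ssum_ext; intros r _. rewrite Cmod_sq. unfold Ure, Uim.
 rewrite Nat.sub_diag. simpl. rewrite Nat.mul_0_r, Nat.add_0_r. ring.
Qed.

Lemma chi_even j i x : chi (S j) (2 * i) x = chi j i x.
Proof. unfold chi. simpl trunc.
 set (T := trunc x j).
 assert (E : 2 * PI * (INR (2 * i * (T + (if x j then 2 ^ j else 0))) / 2 ^ S j)
   = 2 * PI * (INR (i * T) / 2 ^ j) + 2 * INR (if x j then i else 0) * PI).
 { assert (0 < 2 ^ j) by (apply pow_lt; lra).
   destruct (x j); rewrite !mult_INR, ?plus_INR, ?pow_INR; change (INR 2) with 2;
   try change (INR 0) with 0; simpl pow; field; lra. }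
 rewrite E, cos_period, sin_period. reflexivity.
Qed.

From Stdlib Require Import FunctionalExtensionality.

Lemma fourier_even f j i : fourier f (S j) (2 * i) = fourier f j i.
Proof. unfold fourier. f_equal. apply functional_extensionality; intros x. rewrite chi_even. reflexivity. Qed.

Lemma P_step f j : P f (S j) = P f j + ssum (2 ^ j) (fun i => Cmod (fourier f (S j) (2 * i + 1)) ^ 2).
Proof. unfold P. replace (2 ^ S j)%nat with (2 * 2 ^ j)%nat by (simpl; lia).
 rewrite ssum_evenodd, ssum_plus. f_equal. apply ssum_ext; intros. rewrite fourier_even. reflexivity. Qed.

Lemma P_mono f j : P f j <= P f (S j).
Proof. rewrite P_step. assert (0 <= ssum (2 ^ j) (fun i => Cmod (fourier f (S j) (2 * i + 1)) ^ 2)).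
 { apply ssum_nonneg; intros. apply pow2_ge_0. } lra. Qed.

Lemma P_mono_le f j k : (j <= k)%nat -> P f j <= P f k.
Proof. intros H; induction H. lra. pose proof (P_mono f m). lra. Qed.

Lemma P_nonneg f j : 0 <= P f j.
Proof. apply ssum_nonneg; intros; apply pow2_ge_0. Qed.

Definition wt (s : R) (j : nat) : R := Rpower (1 + lam_abs j) (2 * s).

Definition hterm s f j := sum_n (fun k => if lam_valid j k
                    then Rpower (1 + lam_abs j) (2 * s) * Cmod (fourier f j k) ^ 2
                    else 0) (Nat.pow 2 j - 1)%nat.


Lemma Rpower_base1 a : Rpower 1 a = 1.
Proof. unfold Rpower. rewrite ln_1, Rmult_0_r, exp_0. reflexivity. Qed.

Lemma hterm_0 s f : hterm s f 0 = P f 0.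
Proof. unfold hterm. rewrite sum_n_pow2. unfold P. simpl ssum. unfold lam_valid, lam_abs. simpl.
 rewrite Rplus_0_r, Rpower_base1. ring. Qed.

Lemma hterm_S s f j : hterm s f (S j) = wt s (S j) * (P f (S j) - P f j).
Proof. unfold hterm. rewrite sum_n_pow2. rewrite P_step.
 replace (2 ^ S j)%nat with (2 * 2 ^ j)%nat by (simpl; lia).
 rewrite ssum_evenodd. replace (P f j + _ - P f j) with
   (ssum (2 ^ j) (fun i => Cmod (fourier f (S j) (2 * i + 1)) ^ 2)) by ring.
 rewrite <- ssum_scal. apply ssum_ext; intros i _. unfold lam_valid.
 rewrite Nat.odd_even, Nat.odd_odd. simpl orb. unfold wt. ring. Qed.

Lemma Hs_sq s f n : unifC f n ->
  Series (hterm s f) = P f 0 + ssum n (fun j => wt s (S j) * (P f (S j) - P f j)).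
Proof. intros Hf. rewrite (Series_finite _ n).
 - clear Hf. induction n. simpl. rewrite hterm_0. ring.
   rewrite ssum_S, IHn, ssum_S, hterm_S. ring.
 - intros i Hi. destruct i; [lia|]. rewrite hterm_S, (P_top f n (S i)), (P_top f n i) by (auto; lia). ring.
Qed.
Lemma fd_iff x y v : first_diff x y v = true <-> agree x y v /\ x v <> y v.
Proof. unfold first_diff. rewrite Bool.andb_true_iff, Nat.eqb_eq, Bool.negb_true_iff, trunc_agree.
 split; intros [A B]; split; auto.
 - intros E. rewrite E, Bool.eqb_reflx in B. discriminate.
 - destruct (x v), (y v); simpl; auto; exfalso; auto. Qed.

Lemma fd_agree x y v k : first_diff x y v = true -> (agree x y k <-> (k <= v)%nat).
Proof. rewrite fd_iff. intros [A B]. split.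
 - intros H. destruct (Nat.le_gt_cases k v); auto. exfalso. apply B, H. lia.
 - intros H. eapply agree_le; eauto. Qed.

Lemma fd_unique x y v w : first_diff x y v = true -> w <> v -> first_diff x y w = false.
Proof. intros H Hw. destruct (first_diff x y w) eqn:E; auto.
 pose proof (fd_agree x y v w H) as A. pose proof (fd_agree x y w v E) as B.
 rewrite fd_iff in H, E. destruct H, E.
 assert (w <= v)%nat by (apply A; auto). assert (v <= w)%nat by (apply B; auto). lia. Qed.

Lemma dist2_fd x y v : first_diff x y v = true -> dist2 x y = (/ 2) ^ v.
Proof. intros H. unfold dist2. rewrite (Series_finite _ v).
 - rewrite ssum_S, H. rewrite (ssum_ext _ _ (fun _ => 0)). rewrite ssum_zero. ring.
   intros i Hi. rewrite (fd_unique x y v i H) by lia. reflexivity.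
 - intros i Hi. rewrite (fd_unique x y v i H) by lia. reflexivity.
Qed.

Lemma exists_fd x y n : ~ agree x y n -> exists v, (v < n)%nat /\ first_diff x y v = true.
Proof. induction n; intros H.
 - exfalso; apply H. intros i Hi; lia.
 - destruct (classic (agree x y n)) as [A|A].
   + exists n. split; auto. apply fd_iff. split; auto. intros E. apply H.
     intros i Hi. destruct (Nat.eq_dec i n). subst; auto. apply A; lia.
   + destruct (IHn A) as [v [Hv Hv']]. exists v. split; auto.
Qed.

Lemma fd_transfer x y x' y' n v : agree x x' n -> agree y y' n -> (v < n)%nat ->
  first_diff x y v = true -> first_diff x' y' v = true.
Proof. intros Hx Hy Hv H. rewrite fd_iff in *. destruct H as [A B]. split.
 - intros i Hi. rewrite <- (Hx i), <- (Hy i) by lia. auto.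
 - rewrite <- (Hx v), <- (Hy v) by lia. auto. Qed.
Definition R2 (s : R) : R := Rpower 2 (1 + 2 * s).
Definition term s (f : Z2 -> C) x y := Cmod (Cminus (f x) (f y)) ^ 2 / Rpower (dist2 x y) (1 + 2 * s).
Definition cc s k := match k with O => 1 | S k' => R2 s ^ (S k') - R2 s ^ k' end.

Lemma Rpower_pos x y : 0 < Rpower x y.
Proof. unfold Rpower. apply exp_pos. Qed.

Lemma Rpower_half_pow v t : Rpower ((/ 2) ^ v) t = / (Rpower 2 t) ^ v.
Proof.
 assert (E : (/ 2) ^ v = Rpower 2 (- INR v)).
 { rewrite Rpower_Ropp, Rpower_pow by lra. apply pow_inv. }
 rewrite E, Rpower_mult, <- Rpower_pow by apply Rpower_pos.
 rewrite Rpower_mult. replace (- INR v * t) with (- (t * INR v)) by ring.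
 apply Rpower_Ropp. Qed.

Lemma ssum_cc s v : ssum (S v) (cc s) = R2 s ^ v.
Proof. induction v. simpl. ring. rewrite ssum_S, IHv. change (cc s (S v)) with (R2 s ^ S v - R2 s ^ v). ring. Qed.

Lemma Cmod_minus_self z : Cmod (Cminus z z) = 0.
Proof. unfold Cmod, Cminus, Cplus, Copp. cbn [fst snd]. replace (fst z + - fst z) with 0 by ring.
 replace (snd z + - snd z) with 0 by ring. replace (0 ^ 2 + 0 ^ 2) with 0 by ring. apply sqrt_0. Qed.

Lemma term_formula s f n x y : unifC f n ->
  term s f x y = ssum n (fun k => cc s k * (if Nat.eqb (trunc x k) (trunc y k) then 1 else 0))
                 * Cmod (Cminus (f x) (f y)) ^ 2.
Proof. intros Hf. destruct (classic (agree x y n)) as [A|A].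
 - unfold term. rewrite (Hf x y A), Cmod_minus_self. unfold Rdiv. ring.
 - destruct (exists_fd x y n A) as [v [Hv Hfd]].
   unfold term. rewrite (dist2_fd x y v Hfd), Rpower_half_pow.
   rewrite (ssum_tail (S v) n).
   + rewrite (ssum_ext _ _ (cc s)). rewrite ssum_cc. unfold R2. field.
     apply pow_nonzero. pose proof (Rpower_pos 2 (1 + 2 * s)). lra.
     intros k Hk. replace (Nat.eqb (trunc x k) (trunc y k)) with true. ring.
     symmetry. apply Nat.eqb_eq, trunc_agree, (fd_agree x y v k Hfd). lia.
   + intros k Hk. replace (Nat.eqb (trunc x k) (trunc y k)) with false. ring.
     symmetry. apply Nat.eqb_neq. rewrite trunc_agree, (fd_agree x y v k Hfd). lia.
   + lia.
Qed.

Lemma term_unif s f n x y x' y' : unifC f n -> agree x x' n -> agree y y' n -> term s f x y = term s f x' y'.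
Proof. intros Hf Hx Hy. destruct (classic (agree x y n)) as [A|A].
 - unfold term. rewrite (Hf x y A). rewrite <- (Hf x x' Hx), <- (Hf y y' Hy), (Hf x y A), !Cmod_minus_self.
   unfold Rdiv; ring.
 - destruct (exists_fd x y n A) as [v [Hv Hfd]].
   pose proof (fd_transfer x y x' y' n v Hx Hy Hv Hfd) as Hfd'.
   unfold term. rewrite (dist2_fd x y v Hfd), (dist2_fd x' y' v Hfd'), (Hf x x' Hx), (Hf y y' Hy).
   reflexivity.
Qed.

Definition Dint s f := haar_int (fun x => haar_int (fun y => term s f x y)).

Lemma Dint_Avg s f n : unifC f n -> Dint s f = Avg n (fun x => Avg n (fun y => term s f x y)).
Proof. intros Hf. unfold Dint.
 assert (Hin : forall x, haar_int (fun y => term s f x y) = Avg n (fun y => term s f x y)).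
 { intros x. apply haar_Avg. intros y y' H. apply (term_unif s f n); auto; intros ii _; auto. }
 rewrite (haar_Avg _ n).
 - unfold Avg. f_equal. apply ssum_ext; intros. rewrite Hin. reflexivity.
 - intros x x' H. rewrite !Hin. unfold Avg. f_equal. apply ssum_ext; intros.
   apply (term_unif s f n); auto; intros ii _; auto.
Qed.
Definition Qp (f : Z2 -> C) n k := ssum (2 ^ n) (fun a => ssum (2 ^ n) (fun b =>
   (if Nat.eqb (a mod 2 ^ k) (b mod 2 ^ k) then 1 else 0) * Cmod (Cminus (f (of_nat a)) (f (of_nat b))) ^ 2)).

Lemma Dint_decomp s f n : unifC f n ->
  Dint s f = ssum n (fun k => cc s k * ((/ 2) ^ n * (/ 2) ^ n * Qp f n k)).
Proof. intros Hf. rewrite (Dint_Avg s f n Hf). unfold Avg, Qp.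
 set (G := fun k a b => cc s k * (if Nat.eqb (a mod 2 ^ k) (b mod 2 ^ k) then 1 else 0) *
    Cmod (Cminus (f (of_nat a)) (f (of_nat b))) ^ 2).
 rewrite (ssum_ext (2 ^ n) _ (fun a => (/ 2) ^ n * ssum n (fun k => ssum (2 ^ n) (fun b => G k a b)))).
 2:{ intros a _. f_equal. rewrite <- ssum_swap. apply ssum_ext; intros b _. rewrite (term_formula s f n) by auto.
     rewrite <- ssum_scalr. apply ssum_ext; intros k _. unfold G. rewrite !trunc_of_nat. reflexivity. }
 transitivity ((/ 2) ^ n * (/ 2) ^ n * ssum n (fun k => ssum (2 ^ n) (fun a => ssum (2 ^ n) (fun b => G k a b)))).
 - rewrite ssum_scal, ssum_swap. ring.
 - rewrite <- ssum_scal. apply ssum_ext; intros k _. unfold G.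
   rewrite (ssum_ext (2 ^ n) _ (fun a => cc s k * ssum (2 ^ n) (fun b =>
     (if Nat.eqb (a mod 2 ^ k) (b mod 2 ^ k) then 1 else 0) * Cmod (Cminus (f (of_nat a)) (f (of_nat b))) ^ 2))).
   rewrite ssum_scal. ring.
   intros a _. rewrite <- ssum_scal. apply ssum_ext; intros. ring.
Qed.

Lemma var_ident M (u : nat -> R) :
  ssum M (fun q => ssum M (fun q' => (u q - u q') ^ 2)) = 2 * INR M * ssum M (fun q => u q ^ 2) - 2 * (ssum M u) ^ 2.
Proof. rewrite ssum_sq.
 rewrite (ssum_ext _ _ (fun q => INR M * u q ^ 2 + ssum M (fun q' => u q' ^ 2) - 2 * ssum M (fun q' => u q * u q'))).
 - rewrite ssum_minus, ssum_plus, ssum_scal, ssum_const, ssum_scal. ring.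
 - intros q _. rewrite <- ssum_scal, <- (ssum_const M (u q ^ 2)), <- ssum_plus, <- ssum_minus.
   apply ssum_ext; intros. ring.
Qed.

Lemma Cmod_minus_sq z w : Cmod (Cminus z w) ^ 2 = (fst z - fst w) ^ 2 + (snd z - snd w) ^ 2.
Proof. rewrite Cmod_sq. unfold Cminus, Cplus, Copp. cbn [fst snd]. ring. Qed.

Lemma Qp_formula f n k : unifC f n -> (k <= n)%nat ->
  (/ 2) ^ n * (/ 2) ^ n * Qp f n k = 2 * (/ 2) ^ k * (Lsq f - P f k).
Proof. intros Hf Hk. unfold Qp.
 set (F := fun a => f (of_nat a)).
 replace (2 ^ n)%nat with (2 ^ k * 2 ^ (n - k))%nat by (rewrite <- Nat.pow_add_r; f_equal; lia).
 rewrite ssum_mul.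
 rewrite (ssum_ext (2 ^ k) _ (fun r => ssum (2 ^ (n - k)) (fun q => ssum (2 ^ (n - k)) (fun q' =>
   Cmod (Cminus (F (r + 2 ^ k * q)%nat) (F (r + 2 ^ k * q')%nat)) ^ 2)))).
 2:{ intros r Hr. apply ssum_ext; intros q _. rewrite ssum_mul.
     rewrite (ssum_ext (2 ^ k) _ (fun r' => if Nat.eqb r r' then
        ssum (2 ^ (n - k)) (fun q' => Cmod (Cminus (F (r + 2 ^ k * q)%nat) (F (r' + 2 ^ k * q')%nat)) ^ 2) else 0)).
     - rewrite ssum_delta by auto. reflexivity.
     - intros r' Hr'. replace ((r + 2 ^ k * q) mod 2 ^ k)%nat with r.
       2:{ replace (r + 2 ^ k * q)%nat with (r + q * 2 ^ k)%nat by lia. rewrite Nat.Div0.mod_add, Nat.mod_small; auto. }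
       destruct (Nat.eqb_spec r r').
       + rewrite <- e. apply ssum_ext; intros q' _. replace ((r + 2 ^ k * q') mod 2 ^ k)%nat with r.
         rewrite Nat.eqb_refl. unfold F. ring.
         replace (r + 2 ^ k * q')%nat with (r + q' * 2 ^ k)%nat by lia. rewrite Nat.Div0.mod_add, Nat.mod_small; auto.
       + rewrite (ssum_ext _ _ (fun _ => 0)). apply ssum_zero. intros q' _.
         replace ((r' + 2 ^ k * q') mod 2 ^ k)%nat with r'.
         destruct (Nat.eqb_spec r r'); [lia|]. ring.
         replace (r' + 2 ^ k * q')%nat with (r' + q' * 2 ^ k)%nat by lia. rewrite Nat.Div0.mod_add, Nat.mod_small; auto. }
 rewrite (ssum_ext (2 ^ k) _ (fun r => 2 * INR (2 ^ (n - k)) * ssum (2 ^ (n - k)) (fun q => Cmod (F (r + 2 ^ k * q)%nat) ^ 2)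
     - 2 * (Ure f k n r ^ 2 + Uim f k n r ^ 2))).
 2:{ intros r _. rewrite (ssum_ext _ _ (fun q => ssum (2 ^ (n - k)) (fun q' =>
        (fst (F (r + 2 ^ k * q)%nat) - fst (F (r + 2 ^ k * q')%nat)) ^ 2 +
        (snd (F (r + 2 ^ k * q)%nat) - snd (F (r + 2 ^ k * q')%nat)) ^ 2))).
     - rewrite (ssum_ext _ _ (fun q => ssum (2 ^ (n - k)) (fun q' =>
        (fst (F (r + 2 ^ k * q)%nat) - fst (F (r + 2 ^ k * q')%nat)) ^ 2) + ssum (2 ^ (n - k)) (fun q' =>
        (snd (F (r + 2 ^ k * q)%nat) - snd (F (r + 2 ^ k * q')%nat)) ^ 2))).
       + rewrite ssum_plus, !var_ident. unfold Ure, Uim.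
         rewrite (ssum_ext _ (fun q => Cmod (F (r + 2 ^ k * q)%nat) ^ 2) (fun q =>
             fst (F (r + 2 ^ k * q)%nat) ^ 2 + snd (F (r + 2 ^ k * q)%nat) ^ 2)).
         rewrite ssum_plus. unfold F. ring.
         intros; apply Cmod_sq.
       + intros; apply ssum_plus.
     - intros q _. apply ssum_ext; intros q' _. apply Cmod_minus_sq. }
 rewrite ssum_minus, !ssum_scal.
 assert (E2 : ssum (2 ^ k) (fun r => ssum (2 ^ (n - k)) (fun q => Cmod (F (r + 2 ^ k * q)%nat) ^ 2))
    = ssum (2 ^ n) (fun a => Cmod (F a) ^ 2)).
 { replace (2 ^ n)%nat with (2 ^ k * 2 ^ (n - k))%nat by (rewrite <- Nat.pow_add_r; f_equal; lia).
   rewrite ssum_mul. reflexivity. }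
 rewrite E2.
 rewrite (Lsq_Avg f n Hf), (P_formula f n k n) by auto. unfold Avg, F.
 rewrite INR_pow2.
 assert (E : (2:R) ^ n = 2 ^ k * 2 ^ (n - k)) by (rewrite <- pow_add; f_equal; lia).
 assert (0 < 2 ^ k) by (apply pow_lt; lra).
 assert (0 < 2 ^ (n - k)) by (apply pow_lt; lra).
 rewrite !pow_inv, E. field. lra.
Qed.
From Stdlib Require Import ClassicalEpsilon.

Definition good (f : Z2 -> C) (p : Z2) (L : nat) : Prop :=
  exists N, forall y z, agree p y L -> agree p z L -> agree y z N -> f y = f z.

Definition upd (p : Z2) (L : nat) (b : bool) : Z2 := fun i => if Nat.eqb i L then b else p i.

Lemma good_split f p L : good f (upd p L true) (S L) -> good f (upd p L false) (S L) -> good f p L.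
Proof. intros [N1 H1] [N0 H0]. exists (Nat.max (S L) (Nat.max N1 N0)).
 intros y z Hy Hz Hyz.
 assert (Hb : y L = z L) by (apply Hyz; lia).
 assert (Hc : forall w, agree p w L -> agree (upd p L (w L)) w (S L)).
 { intros w Hw i Hi. unfold upd. destruct (Nat.eqb_spec i L). subst; auto. apply Hw; lia. }
 destruct (y L) eqn:E.
 - apply H1.
   + rewrite <- E. apply Hc; auto.
   + replace true with (z L). apply Hc; auto.
   + eapply agree_le; [|eauto]. lia.
 - apply H0.
   + rewrite <- E. apply Hc; auto.
   + replace false with (z L). apply Hc; auto.
   + eapply agree_le; [|eauto]. lia.
Qed.

Definition nextbit f p L : bool :=
  if excluded_middle_informative (good f (upd p L true) (S L)) then false else true.

Fixpoint sq f (L : nat) : Z2 :=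
  match L with O => fun _ => false | S L' => upd (sq f L') L' (nextbit f (sq f L') L') end.

Lemma sq_bad f L : ~ good f (sq f 0) 0 -> ~ good f (sq f L) L.
Proof. intros H0. induction L; auto. simpl. unfold nextbit.
 destruct (excluded_middle_informative (good f (upd (sq f L) L true) (S L))) as [G|G]; auto.
 intros G'. apply IHL. apply good_split; auto. Qed.

Lemma sq_stable f i L : (i < L)%nat -> sq f L i = sq f (S i) i.
Proof. intros H. induction H. reflexivity. simpl. unfold upd at 1.
 destruct (Nat.eqb_spec i m). lia. exact IHle. Qed.

Lemma unif_of_lc f : locally_constant f -> exists n, unifC f n.
Proof. intros Hlc. apply NNPP. intros Hn.
 assert (H0 : ~ good f (sq f 0) 0).
 { intros [N HN]. apply Hn. exists N. intros x y H. apply HN; auto; intros i Hi; lia. }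
 set (z := fun i => sq f (S i) i).
 destruct (Hlc z) as [n Hz].
 apply (sq_bad f n H0). exists O. intros y w Hy Hw _.
 assert (A : agree z (sq f n) n) by (intros i Hi; unfold z; symmetry; apply sq_stable; auto).
 rewrite (Hz y), (Hz w); auto; eapply agree_trans; eauto.
Qed.
Definition qq (s : R) : R := Rpower 2 (2 * s).

Lemma qq_gt1 s : 0 < s -> 1 < qq s.
Proof. intros H. unfold qq. rewrite <- (Rpower_O 2) by lra. apply Rpower_lt; lra. Qed.

Lemma Rpower_pow2 m a : Rpower (2 ^ m) a = Rpower 2 a ^ m.
Proof. rewrite <- (Rpower_pow m 2) by lra. rewrite Rpower_mult.
 rewrite <- Rpower_pow by apply Rpower_pos. rewrite Rpower_mult. f_equal. ring. Qed.

Lemma wt_bounds s j : 0 < s -> qq s ^ S j <= wt s (S j) <= qq s ^ S (S j).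
Proof. intros Hs. unfold wt, lam_abs. simpl Nat.eqb. cbv iota. unfold qq.
 rewrite <- !Rpower_pow2. assert (0 < 2 ^ S j) by (apply pow_lt; lra). split.
 - apply Rle_Rpower_l; [lra | split; lra].
 - apply Rle_Rpower_l; [lra | split; [lra|]]. pose proof (pow_R1_Rle 2 j ltac:(lra)). simpl. lra. Qed.

Lemma R2_qq s : R2 s = 2 * qq s.
Proof. unfold R2, qq. rewrite Rpower_plus, Rpower_1 by lra. reflexivity. Qed.

Lemma dk_bounds s k : 0 < s -> qq s ^ k <= cc s k * (2 * (/ 2) ^ k) <= 2 * qq s ^ k.
Proof. intros Hs. pose proof (qq_gt1 s Hs). destruct k.
 - simpl. lra.
 - unfold cc. rewrite R2_qq.
   replace ((2 * qq s) ^ S k - (2 * qq s) ^ k) with ((2 * qq s) ^ k * (2 * qq s - 1)) by (simpl; ring).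
   rewrite Rpow_mult_distr.
   replace (2 ^ k * qq s ^ k * (2 * qq s - 1) * (2 * (/ 2) ^ S k)) with
     ((2 * / 2) ^ k * qq s ^ k * (2 * qq s - 1)) by (rewrite Rpow_mult_distr; simpl; field).
   replace (2 * / 2) with 1 by field. rewrite pow1.
   assert (0 < qq s ^ k) by (apply pow_lt; lra). simpl. split; nra.
Qed.

Lemma geom_sum q n : (q - 1) * ssum n (fun k => q ^ k) = q ^ n - 1.
Proof. induction n. simpl. ring. rewrite ssum_S. simpl. rewrite Rmult_plus_distr_l, IHn. ring. Qed.

Lemma geom_lemma (g : nat -> R) q : 1 < q -> (forall j, g j <= g (S j)) -> forall n,
  (q - 1) * ssum n (fun k => q ^ k * (g n - g k)) <= ssum n (fun j => q ^ S j * (g (S j) - g j)).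
Proof. intros Hq Hg n. induction n. simpl. lra.
 rewrite !ssum_S.
 rewrite (ssum_ext n _ (fun k => q ^ k * (g n - g k) + (g (S n) - g n) * q ^ k)) by (intros; ring).
 rewrite ssum_plus, ssum_scal.
 pose proof (geom_sum q n) as G. pose proof (Hg n).
 assert (0 < q ^ n) by (apply pow_lt; lra).
 replace (g (S n) - g (S n)) with 0 by ring. replace (q ^ S n) with (q * q ^ n) by (simpl; ring).
 change (ssum n (pow q)) with (ssum n (fun k => q ^ k)).
 set (X := ssum n (fun k => q ^ k)) in *.
 set (Y := ssum n (fun j => q ^ S j * (g (S j) - g j))) in *.
 set (Z := ssum n (fun i => q ^ i * (g n - g i))) in *.
 nra.
Qed.

Lemma main_bounds s f n : 0 < s -> unifC f n ->
  let L := Lsq f in let D := Dint s f in let H := Series (hterm s f) in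
  0 <= L /\ 0 <= D /\ H <= L + qq s ^ 2 * D /\ L + D <= (1 + 2 / (qq s - 1)) * H.
Proof. intros Hs Hf L D H. pose proof (qq_gt1 s Hs) as Hq.
 assert (HL : L = P f n) by (symmetry; apply (P_top f n n); auto).
 assert (Hmono : forall k, (k <= n)%nat -> 0 <= L - P f k).
 { intros k Hk. rewrite HL. pose proof (P_mono_le f k n Hk). lra. }
 set (SS := ssum n (fun k => qq s ^ k * (L - P f k))).
 assert (HD : D = ssum n (fun k => cc s k * (2 * (/ 2) ^ k) * (L - P f k))).
 { unfold D. rewrite (Dint_decomp s f n Hf). apply ssum_ext; intros k Hk.
   rewrite (Qp_formula f n k Hf) by lia. fold L. ring. }
 assert (HSD : SS <= D /\ D <= 2 * SS).
 { rewrite HD. unfold SS. split.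
   - apply ssum_le; intros k Hk. pose proof (dk_bounds s k Hs). pose proof (Hmono k ltac:(lia)). nra.
   - rewrite <- ssum_scal. apply ssum_le; intros k Hk. pose proof (dk_bounds s k Hs).
     pose proof (Hmono k ltac:(lia)). nra. }
 assert (HS0 : 0 <= SS) by (apply ssum_nonneg; intros k Hk; pose proof (Hmono k ltac:(lia));
    pose proof (pow_lt (qq s) k ltac:(lra)); nra).
 assert (HH : H = P f 0 + ssum n (fun j => wt s (S j) * (P f (S j) - P f j))) by (apply Hs_sq; auto).
 assert (Hstep : forall j, 0 <= P f (S j) - P f j) by (intros j; pose proof (P_mono f j); lra).
 assert (HL2 : L = P f 0 + ssum n (fun j => P f (S j) - P f j)).
 { rewrite (ssum_telescope n (P f)). lra. }
 assert (HP0 : 0 <= P f 0) by apply P_nonneg.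
 assert (HG : (qq s - 1) * SS <= ssum n (fun j => qq s ^ S j * (P f (S j) - P f j))).
 { unfold SS. rewrite HL. apply geom_lemma; auto. apply P_mono. }
 assert (HW : ssum n (fun j => qq s ^ S j * (P f (S j) - P f j)) <= ssum n (fun j => wt s (S j) * (P f (S j) - P f j))).
 { apply ssum_le; intros j _. pose proof (wt_bounds s j Hs). pose proof (Hstep j). nra. }
 assert (HW1 : ssum n (fun j => P f (S j) - P f j) <= ssum n (fun j => wt s (S j) * (P f (S j) - P f j))).
 { apply ssum_le; intros j _. pose proof (wt_bounds s j Hs). pose proof (Hstep j).
   pose proof (pow_R1_Rle (qq s) (S j) ltac:(lra)). nra. }
 assert (HW2 : ssum n (fun j => wt s (S j) * (P f (S j) - P f j)) <= qq s ^ 2 * SS).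
 { unfold SS. rewrite <- ssum_scal. apply ssum_le; intros j Hj. pose proof (wt_bounds s j Hs).
   pose proof (Hstep j). pose proof (Hmono (S j) ltac:(lia)).
   assert (qq s ^ S (S j) = qq s ^ 2 * qq s ^ j) by (simpl; ring).
   pose proof (pow_lt (qq s) j ltac:(lra)).
   assert (wt s (S j) * (P f (S j) - P f j) <= qq s ^ S (S j) * (P f (S j) - P f j)) by nra.
   assert (P f (S j) - P f j <= L - P f j) by lra.
   assert (0 < qq s ^ 2) by (apply pow_lt; lra).
   assert (qq s ^ 2 * qq s ^ j * (P f (S j) - P f j) <= qq s ^ 2 * qq s ^ j * (L - P f j)) by
     (apply Rmult_le_compat_l; [nra|lra]).
   rewrite H3 in H5. lra. }
 assert (0 <= ssum n (fun j => P f (S j) - P f j)) by (apply ssum_nonneg; auto).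
 split; [lra|]. split; [lra|]. split.
 - assert (P f 0 <= L) by lra. assert (qq s ^ 2 * SS <= qq s ^ 2 * D).
   { apply Rmult_le_compat_l. apply pow_le; lra. lra. } lra.
 - assert (D <= 2 / (qq s - 1) * H).
   { assert (SS <= H / (qq s - 1)). { apply (Rmult_le_reg_l (qq s - 1)). lra. field_simplify; lra. }
     replace (2 / (qq s - 1) * H) with (2 * (H / (qq s - 1))) by (field; lra). lra. }
   lra.
Qed.

Theorem propositionB4 :
  forall s : R, 0 < s ->
  exists c1 c2 : R, 0 < c1 /\ 0 < c2 /\
    forall f : Z2 -> C, locally_constant f ->
      c1 * Ns s f <= Hs_norm s f /\ Hs_norm s f <= c2 * Ns s f.
Proof. intros s Hs. pose proof (qq_gt1 s Hs) as Hq.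
 set (K := 1 + 2 / (qq s - 1)).
 assert (HK : 0 < K) by (unfold K; assert (0 < 2 / (qq s - 1)) by (apply Rdiv_lt_0_compat; lra); lra).
 assert (HsK : 0 < sqrt (2 * K)) by (apply sqrt_lt_R0; lra).
 exists (/ sqrt (2 * K)), (qq s). split; [apply Rinv_0_lt_compat; auto|]. split; [lra|].
 intros f Hlc. destruct (unif_of_lc f Hlc) as [n Hf].
 pose proof (main_bounds s f n Hs Hf) as [HL [HD [H1 H2]]]. fold K in H2.
 change (Ns s f) with (sqrt (Lsq f) + sqrt (Dint s f)).
 change (Hs_norm s f) with (sqrt (Series (hterm s f))).
 set (L := Lsq f) in *. set (D := Dint s f) in *. set (H := Series (hterm s f)) in *.
 assert (HH : 0 <= H) by nra.
 pose proof (sqrt_pos L). pose proof (sqrt_pos D).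
 pose proof (sqrt_sqrt L HL). pose proof (sqrt_sqrt D HD).
 set (a := sqrt L) in *. set (b := sqrt D) in *.
 split.
 - assert (E : a + b <= sqrt (2 * K) * sqrt H).
   { rewrite <- sqrt_mult by lra. rewrite <- (sqrt_pow2 (a + b)) by lra.
     apply sqrt_le_1_alt. assert (0 <= (a - b) ^ 2) by apply pow2_ge_0.
     replace (2 * K * H) with (2 * (K * H)) by ring.
     assert ((a + b) ^ 2 = 2 * (a * a + b * b) - (a - b) ^ 2) by ring. lra. }
   apply (Rmult_le_reg_l (sqrt (2 * K))); auto. field_simplify; lra.
 - rewrite <- (sqrt_pow2 (qq s * (a + b))) by nra. apply sqrt_le_1_alt.
   assert (qq s ^ 2 * D <= qq s ^ 2 * (a + b) ^ 2 - L).
   { assert (1 <= qq s ^ 2) by (apply pow_R1_Rle; lra).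
     assert ((a + b) ^ 2 >= L + D) by nra. nra. }
   replace ((qq s * (a + b)) ^ 2) with (qq s ^ 2 * (a + b) ^ 2) by ring. lra.
Qed.
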